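(* Let $\varepsilon\in(0,1]$ and $D>0$, and set $n_0:=4K(d+1)/\varepsilon$. Then the set $$\mathcal S=\bigcup_{n\ge n_0}\ \bigcup_{\theta\in\Theta}\ \bigcup_{(x,x^* )\in[K^\theta]\times[K^*]:\,|I_{n,D}(x,x^*,\theta)|\ge n\varepsilon}\{S^{\theta,n}_x-S^{*,n}_{x^*}\}$$ is relatively compact in $(C^0([0,1]),\|\cdot\|_\infty)$.
   Context: Fix integers $K\ge1$, $d\ge1$, $\sigma_-\in(0,1)$; $[K']=\{1,\dots,K'\}$; $\Delta_{K'}$ = probability vectors on $[K']$; $\Sigma^{\sigma_-}_{K'}$ = $K'\times K'$ stochastic matrices with all entries $\ge\sigma_-$; $\mathbb R_d[X]$ = real polynomials of degree $\le d$ on $\mathbb R_+$; $\Gamma$ a set of probability densities on $\mathbb R$. $\Theta=\bigcup_{K'=1}^K\{[K']\}\times\Delta_{K'}\times\Sigma^{\sigma_-}_{K'}\times\Gamma^{K'}\times(\mathbb R_d[X])^{K'}$, elements $\theta=(K^\theta,\pi^\theta,Q^\theta,\gamma^\theta,T^\theta)$ with trends $T^\theta_x\in\mathbb R_d[X]$; $\theta^*=(K^*,\pi^*,Q^*,\gamma^*,T^* )\in\Theta$ is a fixed (true) parameter. $I_{n,D}(x,x^*,\theta)=\{t\in\{1,\dots,n\}:|T^*_{x^*}(t)-T^\theta_x(t)|\le D\}$. Rescaled trends: $S^{\theta,n}_x(u)=T^\theta_x(nu)$ and $S^{*,n}_{x^*}(u)=T^*_{x^*}(nu)$ for $u\in[0,1]$.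 *)

(* Defs.v *)
From HB Require Import structures.
From mathcomp Require Import all_boot all_order all_algebra.
From mathcomp Require Import all_classical all_reals all_analysis.
Set Implicit Arguments. Unset Strict Implicit. Unset Printing Implicit Defensive.
Import Order.TTheory GRing.Theory Num.Theory.
Import numFieldNormedType.Exports.
Local Open Scope classical_set_scope.
Local Open Scope ring_scope.

(* A parameter theta = (K^theta, pi^theta, Q^theta, gamma^theta, T^theta).
   Hidden states [K'] = {1..K'} are represented by 'I_K' = {0..K'-1}. *)
Record param (R : realType) := Param {
  pK : nat;
  ppi : 'I_pK -> R;
  pQ : 'I_pK -> 'I_pK -> R;
  pgamma : 'I_pK -> R -> R;
  pT : 'I_pK -> {poly R} }.
Arguments pK {R} p.
Arguments ppi {R} p _.
Arguments pQ {R} p _ _.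
Arguments pgamma {R} p _ _.
Arguments pT {R} p _.

Definition is_density (R : realType) (g : R -> R) : Prop :=
  (forall x, 0 <= g x) /\ measurable_fun setT g /\
  (\int[@lebesgue_measure R]_x (g x)%:E = 1%E)%E.

Definition in_Theta (R : realType) (K d : nat) (sigma_m : R)
    (Gamma : set (R -> R)) (th : param R) : Prop :=
  [/\ (1 <= pK th <= K)%N,
      (forall i, 0 <= ppi th i) /\ \sum_i ppi th i = 1,
      (forall i j, sigma_m <= pQ th i j) /\ (forall i, \sum_j pQ th i j = 1),
      (forall i, Gamma (pgamma th i)) &
      (forall i, (size (pT th i) <= d.+1)%N)].

Definition card_I (R : realType) (n : nat) (D : R) (Tx Tstar : {poly R}) : nat :=
  size [seq t <- iota 1 n | `|Tstar.[t%:R] - Tx.[t%:R]| <= D].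

Definition rescale (R : realType) (n : nat) (T : {poly R}) : R -> R :=
  fun u => T.[n%:R * u].

Definition setS (R : realType) (K d : nat) (sigma_m : R) (Gamma : set (R -> R))
    (thstar : param R) (eps D : R) : set (R -> R) :=
  [set f | exists (n : nat) (th : param R) (x : 'I_(pK th)) (xs : 'I_(pK thstar)),
     [/\ 4 * K%:R * (d.+1)%:R / eps <= n%:R,
         in_Theta K d sigma_m Gamma th,
         n%:R * eps <= (card_I n D (pT th x) (pT thstar xs))%:R &
         f = (fun u => rescale n (pT th x) u - rescale n (pT thstar xs) u)]].

(* Main.v *)
Require Import Defs.
From HB Require Import structures.
From mathcomp Require Import all_boot all_order all_algebra.
From mathcomp Require Import all_classical all_reals all_analysis.
From mathcomp Require Import lra zify ring.
Import Order.TTheory GRing.Theory Num.Theory.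
Import numFieldNormedType.Exports.
Local Open Scope classical_set_scope.
Local Open Scope ring_scope.
Section S.
Variable R : realType.

Definition lb (N : nat) (s : nat -> R) (i : 'I_N) (u : R) :=
  \prod_(j < N | j != i) (u - s j) / \prod_(j < N | j != i) (s i - s j).

Arguments lb {N}.
Lemma lag N (s : nat -> R) : (0 < N)%N ->
  (forall i j : 'I_N, s i = s j -> i = j) ->
  forall p : {poly R}, (size p <= N)%N ->
  forall u, p.[u] = \sum_(i < N) p.[s i] * lb s i u.
Proof.
move=> N0 sinj p sp u.
pose B : R := 1 + \sum_(i < N) `|s i|.
have Bge : forall k, (k < N)%N -> `|s k| < B.
  move=> k kN; rewrite /B (bigD1 (Ordinal kN)) //=.
  have h : 0 <= \sum_(j < N | j != Ordinal kN) `|s j| by apply: sumr_ge0.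
  move: h; set t := \sum_(_ < _ | _) _ => h.
  rewrite /=. lra.
pose x := fun j : nat => if (j < N)%N then s j else B + j%:R.
have xinj : injective x.
  move=> i j; rewrite /x.
  case: (ltnP i N) => iN; case: (ltnP j N) => jN.
  - by move=> /(sinj (Ordinal iN) (Ordinal jN)) [].
  - move=> e; have := Bge _ iN; rewrite e ger0_norm; last first.
      by apply: addr_ge0 => //; apply: ltW; apply: le_lt_trans (Bge _ iN).
    by rewrite ltNge lerDl ler0n; case.
  - move=> e; have := Bge _ jN; rewrite -e ger0_norm; last first.
      by apply: addr_ge0 => //; apply: ltW; apply: le_lt_trans (Bge _ jN).
    by rewrite ltNge lerDl ler0n; case.
  - by move/addrI/eqP; rewrite eqr_nat => /eqP.
rewrite {1}(lagrange_gen N0 xinj sp) horner_sum.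
apply: eq_bigr => i _.
rewrite (lagrangeE N0 xinj) hornerM hornerC hornerCM !horner_prod /lb /x ltn_ord.
congr (_ * _); rewrite mulrC; congr (_ * _).
  by apply: eq_bigr => j _; rewrite hornerXsubC ltn_ord.
by congr (_^-1); apply: eq_bigr => j _; rewrite hornerXsubC ltn_ord.
Qed.
Lemma prod_const_C1 N (i : 'I_N) (c : R) :
  \prod_(j < N | j != i) c = c ^+ N.-1.
Proof.
rewrite prodr_const; congr (_ ^+ _).
have := cardC1 i; rewrite card_ord => <-; by apply: eq_card => j.
Qed.

Lemma lb_bound N (s : nat -> R) (i : 'I_N) (u A Bd : R) : 0 < Bd ->
  (forall j : 'I_N, j != i -> `|u - s j| <= A) ->
  (forall j : 'I_N, j != i -> Bd <= `|s i - s j|) ->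
  `|lb s i u| <= (A / Bd) ^+ N.-1.
Proof.
move=> Bd0 hA hB.
have hn : `|\prod_(j < N | j != i) (u - s j)| <= A ^+ N.-1.
  rewrite normr_prod -(prod_const_C1 _ i); apply: ler_prod => j ji.
  by rewrite normr_ge0 hA.
have hd : Bd ^+ N.-1 <= `|\prod_(j < N | j != i) (s i - s j)|.
  rewrite normr_prod -(prod_const_C1 _ i); apply: ler_prod => j ji.
  by rewrite ltW // hB.
have Bk : 0 < Bd ^+ N.-1 by rewrite exprn_gt0.
have dk : 0 < `|\prod_(j < N | j != i) (s i - s j)| by exact: (lt_le_trans Bk hd).
rewrite /lb normrM normfV ler_pdivrMr // expr_div_n.
have A0 : 0 <= A^+N.-1 by apply: le_trans hn.
apply: (le_trans hn).
by rewrite mulrAC ler_pdivlMr // ler_wpM2l.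
Qed.
Lemma nth_gap (G : seq nat) : sorted ltn G ->
  forall a k, (a + k < size G)%N -> (nth 0 G a + k <= nth 0 G (a + k))%N.
Proof.
move=> sG a; elim=> [|k IH] h; first by rewrite !addn0.
have h1 : (a + k < size G)%N by apply: leq_trans h; rewrite addnS.
have := sorted_ltn_nth ltn_trans 0 sG; move=> /(_ (a + k)%N (a + k.+1)%N).
rewrite !inE => /(_ h1 h); rewrite addnS ltnSn => /(_ isT) lt.
by rewrite addnS; exact: leq_ltn_trans (IH h1) lt.
Qed.

Lemma poly_bound N (P : {poly R}) (n : nat) (pr : pred nat) (eps D : R) :
  (0 < N)%N -> (size P <= N)%N -> 0 < eps -> 0 <= D ->
  (forall t, pr t -> `|P.[t%:R]| <= D) ->
  n%:R * eps <= (size [seq t <- iota 1 n | pr t])%:R ->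
  2 * N%:R <= n%:R * eps ->
  forall y, 0 <= y <= n%:R -> `|P.[y]| <= N%:R * (D * (2 * N%:R / eps) ^+ N.-1).
Proof.
move=> N0 sP e0 D0 hpr hm hN y /andP[y0 yn].
set G := [seq t <- iota 1 n | pr t] in hm.
set m := size G in hm.
have sG : sorted ltn G by apply: sorted_filter; [exact: ltn_trans|exact: iota_ltn_sorted].
pose q := (m %/ N)%N.
have Nm : (N <= m)%N.
  rewrite -(ler_nat R); apply: (le_trans _ hm); apply: (le_trans _ hN).
  by rewrite ler_pMl ?ltr0n // ler1n.
have q0 : (0 < q)%N by rewrite divn_gt0.
have qm : (q * N <= m)%N by apply: leq_divM.
have mq : (m < q.+1 * N)%N by apply: ltn_ceil.
have neq : n%:R * eps <= 2 * N%:R * q%:R.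
  apply: (le_trans hm).
  have : (m <= 2 * N * q)%N.
    apply: ltnW; apply: leq_trans mq _.
    nia.
  by rewrite -(ler_nat R) !natrM.
pose s := fun j : nat => ((nth 0%N G (j * q)%N)%:R : R).
have idx : forall j : 'I_N, (j * q < m)%N.
  move=> j; apply: leq_trans qm; rewrite mulnC ltn_pmul2l //.
have inG : forall j : 'I_N, nth 0%N G (j * q)%N \in G by move=> j; apply: mem_nth.
have gap : forall i j : 'I_N, (i < j)%N -> q%:R <= s j - s i.
  move=> i j ij; rewrite /s.
  have e : (j * q = i * q + (j - i) * q)%N by rewrite -mulnDl subnKC // ltnW.
  have := nth_gap G sG (i * q)%N ((j - i) * q)%N; rewrite -e => /(_ (idx j)) h.
  rewrite lerBrDr -natrD ler_nat; apply: leq_trans h; rewrite addnC leq_add2l.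
  by rewrite leq_pmull // subn_gt0.
have gapn : forall i j : 'I_N, j != i -> q%:R <= `|s i - s j|.
  move=> i j; rewrite neq_ltn => /orP[] h.
    exact: (le_trans (gap _ _ h) (ler_norm _)).
  by rewrite distrC; exact: (le_trans (gap _ _ h) (ler_norm _)).
have sinj : forall i j : 'I_N, s i = s j -> i = j.
  move=> i j e; apply/eqP; apply/negPn/negP => ij.
  have := gapn _ _ ij; rewrite e subrr normr0 leNgt ltr0n q0; by move=> /negP; apply.
have srange : forall j : 'I_N, 1 <= s j <= n%:R.
  move=> j; have := inG j; rewrite mem_filter mem_iota => /andP[_ /andP[h1 h2]].
  by rewrite /s ler1n h1 ler_nat -ltnS -add1n.
have Ps : forall j : 'I_N, `|P.[s j]| <= D.
  move=> j; have := inG j; rewrite mem_filter => /andP[h _]; exact: hpr.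
rewrite (lag _ _ N0 sinj _ sP).
apply: (le_trans (ler_norm_sum _ _ _)).
rewrite (_ : N%:R * _ = \sum_(i < N) (D * (2 * N%:R / eps) ^+ N.-1)); last by rewrite sumr_const card_ord mulr_natl.
apply: ler_sum => i _; rewrite normrM.
apply: ler_pM => //.
have q0r : 0 < q%:R :> R by rewrite ltr0n.
apply: (le_trans (lb_bound N s i y n%:R q%:R q0r _ (gapn i))).
  move=> j _; have /andP[h1 h2] := srange j.
  rewrite ler_norml; apply/andP; split; lra.
apply: lerXn2r.
- by rewrite rpred_div // rpred_nat.
- by rewrite nnegrE divr_ge0 // ?mulr_ge0 // ltW.
by rewrite ler_pdivlMr // mulrAC ler_pdivrMr.
Qed.
Lemma lb_sample N (s : nat -> R) (sinj : forall i j : 'I_N, s i = s j -> i = j)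
  (i j : 'I_N) : lb s i (s j) = (i == j)%:R.
Proof.
rewrite /lb; have [<-|ij] := eqVneq i j.
  rewrite divff //; apply/prodf_neq0 => k ki; rewrite subr_eq0.
  by apply/eqP => /sinj /eqP; rewrite eq_sym (negPf ki).
by rewrite (bigD1 j) 1?eq_sym //= subrr mul0r mul0r.
Qed.

Definition xf (d : nat) (j : nat) : R := j%:R / d%:R.
Definition Phi (d : nat) (g : R -> R) (u : R) : R :=
  \sum_(i < d.+1) g (xf d i) * lb (xf d) i u.

Lemma xf01 d (i : 'I_d.+1) : (0 < d)%N -> 0 <= xf d i <= 1.
Proof.
move=> d0; have dr : 0 < d%:R :> R by rewrite ltr0n.
rewrite /xf divr_ge0 ?ler0n //= ler_pdivrMr // mul1r ler_nat.
by rewrite -ltnS.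
Qed.

Lemma xf_gap d (i j : 'I_d.+1) : (0 < d)%N -> j != i ->
  1 / d%:R <= `|xf d i - xf d j|.
Proof.
move=> d0 ji; have dr : 0 < d%:R :> R by rewrite ltr0n.
rewrite /xf -mulrBl normrM (ger0_norm (_ : 0 <= d%:R^-1)); last by rewrite invr_ge0 ltW.
rewrite div1r -[X in X <= _]mul1r; apply: ler_wpM2r; first by rewrite invr_ge0 ltW.
move: ji; rewrite neq_ltn => /orP[] h.
  have h' : (nat_of_ord j)%:R + 1 <= (nat_of_ord i)%:R :> R by rewrite natr1 ler_nat.
  by rewrite ler_normr; apply/orP; left; lra.
have h' : (nat_of_ord i)%:R + 1 <= (nat_of_ord j)%:R :> R by rewrite natr1 ler_nat.
by rewrite ler_normr; apply/orP; right; lra.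
Qed.

Lemma xf_inj d : (0 < d)%N -> forall i j : 'I_d.+1, xf d i = xf d j -> i = j.
Proof.
move=> d0 i j e; apply/eqP; apply/negPn/negP => ij.
have := xf_gap d j i d0 ij; rewrite e subrr normr0 leNgt.
by rewrite divr_gt0 ?ltr0n.
Qed.

Lemma lbf_bound d (i : 'I_d.+1) u : (0 < d)%N -> 0 <= u <= 1 ->
  `|lb (xf d) i u| <= (1 / (1 / d%:R)) ^+ d.
Proof.
move=> d0 /andP[u0 u1].
have := lb_bound d.+1 (xf d) i u 1 (1 / d%:R); apply.
- by rewrite divr_gt0 ?ltr0n.
- move=> j _; have /andP[h1 h2] := xf01 _ j d0.
  rewrite ler_norml; apply/andP; split; lra.
- by move=> j ji; apply: xf_gap.
Qed.

Lemma Phi_poly d (Q : {poly R}) : (0 < d)%N -> (size Q <= d.+1)%N ->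
  forall u, Phi d (horner Q) u = Q.[u].
Proof.
move=> d0 sQ u; rewrite /Phi (lag _ _ (ltn0Sn d) (xf_inj _ d0) _ sQ u).
by [].
Qed.
Lemma itv01 (y : R) : `[(0:R), 1]%classic y <-> 0 <= y <= 1.
Proof. by rewrite /= in_itv. Qed.

Lemma approx (C : set {uniform` `[(0:R), 1] -> R}) (g : {uniform` `[(0:R), 1] -> R}) :
  closure C g -> forall e, 0 < e ->
  exists h, C h /\ forall y, 0 <= y <= 1 -> `|g y - h y| < e.
Proof.
move=> cl e e0.
have := cl [set h | forall y, `[(0:R), 1]%classic y -> ball (g y) e (h y)].
case.
  apply/uniform_nbhs; exists [set xy | ball xy.1 e xy.2]; split => //.
  exact: (entourage_ball _ (PosNum e0)).
move=> h [Ch Bh]; exists h; split => //.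
Qed.
End S.
Arguments lb {R N}. Arguments xf {R}. Arguments Phi {R}.
Arguments lag {R}. Arguments lb_bound {R}. Arguments poly_bound {R}. Arguments lb_sample {R}.
Arguments xf01 {R}. Arguments xf_gap {R}. Arguments xf_inj {R}. Arguments lbf_bound {R}.
Arguments Phi_poly {R}. Arguments itv01 {R}. Arguments approx {R}.

Theorem theorem11 (R : realType) (K d : nat) (sigma_m : R) (Gamma : set (R -> R))
    (thstar : param R) (eps D : R) :
  (1 <= K)%N -> (1 <= d)%N -> 0 < sigma_m < 1 ->
  (forall g, Gamma g -> is_density g) ->
  in_Theta K d sigma_m Gamma thstar ->
  0 < eps <= 1 -> 0 < D ->
  compact (closure (setS K d sigma_m Gamma thstar eps D
                     : set {uniform` `[0, 1] -> R})).
Proof.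
move=> K1 d1 _ _ Thstar /andP[e0 e1] D0.
pose N := d.+1.
pose M : R := N%:R * (D * (2 * N%:R / eps) ^+ N.-1).
pose L : R := (1 / (1 / d%:R)) ^+ d.
pose C := [set g : {uniform` `[0, 1] -> R} | (forall i : 'I_N, `|g (xf d i)| <= M)
   /\ (forall u, 0 <= u <= 1 -> g u = Phi d g u)].
rewrite -precompactE.
have SC : (setS K d sigma_m Gamma thstar eps D : set {uniform` `[0, 1] -> R}) `<=` C.
  move=> f [n [th [x [xs [hn Th hI ->]]]]].
  case: Th => _ _ _ _ hT; case: Thstar => _ _ _ _ hT'.
  set Tx := pT th x; set Ts := pT thstar xs.
  pose P := Tx - Ts.
  have sP : (size P <= N)%N.
    apply: leq_trans (size_add _ _) _; rewrite size_opp geq_max.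
    by rewrite hT hT'.
  have fE : forall u, rescale n Tx u - rescale n Ts u = P.[n%:R * u].
    by move=> u; rewrite /rescale /P hornerD hornerN.
  pose Q := P \Po (n%:R *: 'X).
  have QE : forall u, Q.[u] = P.[n%:R * u].
    by move=> u; rewrite horner_comp hornerZ hornerX.
  have sQ : (size Q <= N)%N.
    apply: leq_trans (size_comp_poly_leq _ _) _.
    have h2 : ((size (n%:R *: ('X : {poly R}))).-1 <= 1)%N.
      have := size_scale_leq (n%:R : R) ('X : {poly R}); rewrite size_polyX => h; by rewrite -subn1 leq_subLR add1n.
    have h1 : ((size P).-1 <= d)%N by rewrite -subn1 leq_subLR add1n.
    rewrite ltnS; apply: leq_trans (leq_mul h1 h2) _; by rewrite muln1.
  have hN : 2 * N%:R <= n%:R * eps.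
    have h4 : 4 * K%:R * N%:R <= n%:R * eps by rewrite -ler_pdivrMr.
    have K1r : 1 <= K%:R :> R by rewrite ler1n.
    have N0r : 0 <= N%:R :> R by rewrite ler0n.
    nra.
  split.
  - move=> i /=; rewrite fE.
    apply: (poly_bound N P n (fun t => `|Ts.[t%:R] - Tx.[t%:R]| <= D) eps D) => //.
    + exact: ltW.
    + by move=> t /=; rewrite /P hornerD hornerN distrC.
    + have h := xf01 (R:=R) d i d1; case/andP: h => h1 h2.
      by rewrite mulr_ge0 ?ler0n //= ler_piMr ?ler0n.
  - move=> u _ /=; rewrite fE -QE -(Phi_poly d Q d1 sQ u) /Phi.
    by apply: eq_bigr => i _; rewrite /= fE QE.
have clC : closed C.
  move=> g clg; split.
  - move=> i; apply/ler_addgt0Pr => e e0'.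
    have [h [[hM _] hg]] := approx C g clg e e0'.
    have k1 := hg _ (xf01 (R:=R) d i d1); have k2 := hM i.
    have k3 := ler_normD (g (xf d i) - h (xf d i)) (h (xf d i)).
    rewrite subrK in k3.
    lra.
  - move=> u u01.
    pose S := \sum_(i < N) `|lb (xf d) i u|.
    have S0 : 0 <= S by apply: sumr_ge0 => i _.
    pose c := 1 + S.
    have c0 : 0 < c by rewrite /c; lra.
    apply/eqP; rewrite -subr_eq0 -normr_le0.
    apply/ler_addgt0Pr => e e0'; rewrite add0r.
    have ec0 : 0 < e / c by rewrite divr_gt0.
    have [h [[_ hP] hg]] := approx C g clg (e / c) ec0.
    have k1 : `|g u - h u| <= e / c by apply: ltW; apply: hg.
    have k2 : `|Phi d h u - Phi d g u| <= e / c * S.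
      rewrite /Phi -sumrB; apply: le_trans (ler_norm_sum _ _ _) _.
      rewrite /S mulr_sumr; apply: ler_sum => i _; rewrite -mulrBl normrM.
      apply: ler_wpM2r; first exact: normr_ge0.
      by rewrite distrC; apply: ltW; apply: hg; apply: xf01.
    rewrite (_ : g u - Phi d g u = (g u - h u) + (Phi d h u - Phi d g u)); last first.
      by rewrite -(hP u u01) addrA subrK.
    apply: le_trans (ler_normD _ _) _; apply: le_trans (lerD k1 k2) _.
    rewrite -{1}[e / c]mulr1 -mulrDr divfK //; exact: lt0r_neq0.
have cC : compact C.
  move=> F PF FC.
  pose Psi := fun g : {uniform` `[0, 1] -> R} => (\row_(i < N) g (xf (R:=R) d i) : 'rV[R]_N).
  pose box := [set v : 'rV[R]_N | forall i, `[-M, M]%classic (v ord0 i)].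
  have cbox : compact box. apply: (rV_compact (A := fun _ => `[-M, M]%classic)) => i; exact: segment_compact.
  have Fbox : (Psi @ F) box.
    suff Fb : F (Psi @^-1` box) by [].
    apply: (filterS _ FC) => g [hM _] i; rewrite /= mxE in_itv /= -ler_norml; exact: hM.
  have [v0 [bv0 clv0]] := cbox (Psi @ F) _ Fbox.
  pose g0 := fun u => \sum_(i < N) v0 ord0 i * lb (xf (R:=R) d) i u.
  have xinj := xf_inj (R:=R) d d1.
  have g0x : forall j : 'I_N, g0 (xf d j) = v0 ord0 j.
    move=> j; rewrite /g0 (bigD1 j) //= lb_sample // eqxx mulr1 big1 ?addr0 //.
    by move=> i ij; rewrite lb_sample // (negPf ij) mulr0.
  have L0 : 0 <= L by rewrite exprn_ge0 // !divr_ge0 ?ler0n.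
  exists g0; split.
    split.
      move=> i; rewrite g0x; have := bv0 i; rewrite /= in_itv /= -ler_norml; done.
    by move=> u _; rewrite /Phi; apply: eq_bigr => i _; rewrite g0x.
  move=> A B FA /uniform_nbhs [E [entE EB]].
  rewrite -entourage_from_ballE in entE; case: entE => e /= e0' eE.
  pose del := e / (1 + N%:R * L).
  have NL0 : 0 <= N%:R * L by rewrite mulr_ge0 ?ler0n.
  have del0 : 0 < del by rewrite divr_gt0 //; lra.
  have FP : (Psi @ F) [set w | exists h, A h /\ C h /\ Psi h = w].
    suff Fb : F (Psi @^-1` [set w | exists h, A h /\ C h /\ Psi h = w]) by [].
    by apply: (filterS _ (filterI FA FC)) => h [Ah Ch]; exists h.
  have nb : nbhs v0 (ball v0 del) by apply/nbhs_ballP; exists del.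
  have [w [[h [Ah [Ch hw]]] bw]] := clv0 _ _ FP nb.
  exists h; split => //; apply: EB => y /itv01 y01; apply: eE => /=.
  rewrite -ball_normE /ball_ /=.
  case: bw => _ hb.
  have hb' : forall i : 'I_N, `|v0 ord0 i - h (xf d i)| < del.
    move=> i; have := hb ord0 i; rewrite -hw /Psi mxE -ball_normE /ball_ /=; done.
  case: Ch => _ hP; rewrite (hP y y01) /g0 /Phi -sumrB.
  apply: le_lt_trans (ler_norm_sum _ _ _) _.
  apply: le_lt_trans (_ : _ <= \sum_(i < N) del * L) _.
    apply: ler_sum => i _; rewrite -mulrBl normrM.
    apply: ler_pM => //; first exact: ltW.
    exact: lbf_bound.
  rewrite sumr_const card_ord -mulr_natl /del.
  have t0 : 0 < 1 + N%:R * L by lra.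
  rewrite (_ : N%:R * (e / (1 + N%:R * L) * L) = (e * (N%:R * L)) / (1 + N%:R * L)); last by ring.
  rewrite ltr_pdivrMr // ltr_pM2l //; lra.
apply: (precompact_subset SC); rewrite precompact_closed //.
Qed.
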